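(* Let $S$ be a numerical semigroup, let $\Lambda\subseteq\mathrm{IBetti}(S)$ be nonempty and let $b\in\mathrm{IBetti}(S)\setminus\Lambda$. For $s\in S$ let $q_s$ be the largest integer with $q_sb\le_S s$. Then for every $s\in S$ $$\mathrm B(s;\Lambda\cup\{b\})=\bigcup_{j=0}^{q_s}\Big(\mathrm B(s-jb;\Lambda)+\underbrace{\mathrm I(b)+\cdots+\mathrm I(b)}_{j}\Big),$$ where $+$ denotes Minkowski sum of subsets of $\mathbb N^e$ (the $j=0$ term being $\mathrm B(s;\Lambda)$). In particular, $$|\mathrm B(s;\Lambda\cup\{b\})|\le\sum_{j=0}^{q_s}|\mathrm B(s-jb;\Lambda)|\binom{\mathrm i(b)+j-1}{j}.$$
   Context: A numerical semigroup $S$ is a submonoid of $(\mathbb N,+)$ with finite complement, minimally generated by $\{n_1,\dots,n_e\}$. Write $a\le_S b$ if $b-a\in S$. Let $\varphi:\mathbb N^e\to S$, $\varphi(a)=\sum_ia_in_i$; $\mathrm Z(s)=\varphi^{-1}(s)$. $\nabla_s$ is the graph on $\mathrm Z(s)$ with distinct $x,y$ adjacent iff $x\cdot y\ne0$; $s$ is a Betti element if $\nabla_s$ is disconnected. A factorization $z\in\mathrm Z(s)$ is isolated if $z\cdot x=0$ for all $x\in\mathrm Z(s)\setminus\{z\}$; $\mathrm I(t)$ is the set of isolated factorizations of $t$, $\mathrm i(t)=|\mathrm I(t)|$, and $\mathrm I(\Lambda)=\bigcup_{t\in\Lambda}\mathrm I(t)$. $\mathrm I_s(S)$ is the set of $z\in\mathbb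 N^e$ such that $\varphi(z)$ has exactly one factorization. $\mathrm{IBetti}(S)$ is the set of Betti elements $b$ with $\mathrm I(b)\ne\emptyset$. For $\Lambda\subseteq S$ and $s\in S$, $\mathrm B(s;\Lambda)=\{w+x_1+\cdots+x_l\in\mathrm Z(s): w\in\mathrm I_s(S),\ l\ge0,\ x_1,\dots,x_l\in\mathrm I(\Lambda)\}$. *)

(* Defs.v *)
From HB Require Import structures.
From mathcomp Require Import all_boot finmap.
From mathcomp Require Import boolp classical_sets cardinality.
From Stdlib Require Import Relations.

Set Implicit Arguments.
Unset Strict Implicit.
Unset Printing Implicit Defensive.

Local Open Scope classical_set_scope.

Definition fact (e : nat) := {ffun 'I_e -> nat}.

Section Semigroup.
Variables (e : nat) (n : 'I_e -> nat).

Definition addf (x y : fact e) : fact e := [ffun i => x i + y i].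
Definition dotf (x y : fact e) : nat := \sum_(i < e) x i * y i.
Definition phi (z : fact e) : nat := \sum_(i < e) z i * n i.

Definition inS (s : nat) : Prop := exists z : fact e, phi z = s.
Definition leS (a b : nat) : Prop := a <= b /\ inS (b - a).

(* S is a numerical semigroup (finite complement in N) minimally generated
   by {n_1, ..., n_e}: no n_i lies in the monoid generated by the others. *)
Definition numerical_semigroup_min_gens : Prop :=
  (exists N, forall m, N <= m -> inS m) /\
  (forall i : 'I_e, ~ exists z : fact e, z i = 0 /\ phi z = n i).

Definition Z (s : nat) : set (fact e) := [set z | phi z = s].

Definition nabla_adj (s : nat) (x y : fact e) : Prop :=
  Z s x /\ Z s y /\ x <> y /\ dotf x y <> 0.

Definition nabla_connected (s : nat) : Prop :=
  forall x y, Z s x -> Z s y -> clos_refl_trans (fact e) (nabla_adj s) x y.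

Definition Betti (s : nat) : Prop := inS s /\ ~ nabla_connected s.

Definition Iso (t : nat) : set (fact e) :=
  [set z | Z t z /\ forall x, Z t x -> x <> z -> dotf z x = 0].

Definition iso_card (t : nat) : nat := #|` fset_set (Iso t) |.

Definition IsoL (L : set nat) : set (fact e) :=
  [set z | exists t, L t /\ Iso t z].

Definition Is : set (fact e) :=
  [set z | forall x, phi x = phi z -> x = z].

Definition IBetti : set nat := [set b | Betti b /\ Iso b !=set0].

Definition Bset (s : nat) (L : set nat) : set (fact e) :=
  [set z | Z s z /\ exists (w : fact e) (xs : seq (fact e)),
      Is w /\ (forall x, x \in xs -> IsoL L x) /\ z = foldr addf w xs].

End Semigroup.

Definition msum (e : nat) (A B : set (fact e)) : set (fact e) :=
  [set z | exists a b, A a /\ B b /\ z = addf a b].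

Definition msum_iter (e : nat) (A B : set (fact e)) (j : nat) : set (fact e) :=
  iter j (fun X => msum X B) A.

(* Main.v *)
Require Import Defs.
From HB Require Import structures.
From mathcomp Require Import all_boot finmap.
From mathcomp Require Import boolp classical_sets cardinality.

Local Open Scope classical_set_scope.

Module Helpers.
Set Implicit Arguments. Unset Strict Implicit.

Section Help.
Variables (e : nat) (n : 'I_e -> nat).
Local Notation add := (@addf e).

Lemma addfE (x y : fact e) i : addf x y i = x i + y i.
Proof. by rewrite /addf ffunE. Qed.

Lemma addfC (x y : fact e) : addf x y = addf y x.
Proof. by apply/ffunP => i; rewrite !addfE addnC. Qed.

Lemma phiD (x y : fact e) : phi n (addf x y) = phi n x + phi n y.
Proof. by rewrite /phi -big_split /=; apply: eq_bigr => i _; rewrite addfE mulnDl. Qed.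

Lemma foldr_addfE (w : fact e) xs i :
  foldr add w xs i = w i + \sum_(x <- xs) x i.
Proof.
elim: xs => [|x xs IH] /=; first by rewrite big_nil addn0.
by rewrite addfE IH big_cons addnCA.
Qed.

Lemma phi_foldr (w : fact e) xs :
  phi n (foldr add w xs) = phi n w + \sum_(x <- xs) phi n x.
Proof.
elim: xs => [|x xs IH] /=; first by rewrite big_nil addn0.
by rewrite phiD IH big_cons addnCA.
Qed.

Lemma foldr_perm (w : fact e) xs ys : perm_eq xs ys ->
  foldr add w xs = foldr add w ys.
Proof.
move=> p; apply/ffunP => i; rewrite !foldr_addfE; congr (_ + _).
exact: perm_big.
Qed.

Lemma sum_const_phi (xs : seq (fact e)) t :
  (forall x, x \in xs -> phi n x = t) -> \sum_(x <- xs) phi n x = size xs * t.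
Proof.
elim: xs => [|x xs IH] H /=; first by rewrite big_nil.
rewrite big_cons H ?mem_head // IH ?mulSn // => y yin; apply: H.
by rewrite in_cons yin orbT.
Qed.

Definition Tl (A I : set (fact e)) (j : nat) : set (fact e) :=
  [set z | exists a xs, A a /\ size xs = j /\ (forall x, x \in xs -> I x) /\
     z = foldr add a xs].

Lemma msum_iterE A I j : msum_iter A I j = Tl A I j.
Proof.
elim: j => [|j IH].
  apply/seteqP; split => z /=.
    by move=> Az; exists z, [::]; split => //.
  by move=> [a [xs [Aa [/size0nil -> [_ ->]]]]].
rewrite /msum_iter iterS -/(msum_iter A I j) IH.
apply/seteqP; split => z /=.
  move=> [y [x [[a [xs [Aa [sz [Ixs ->]]]]] [Ix ->]]]].
  exists a, (x :: xs); split => //; split; first by rewrite /= sz.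
  split; last by rewrite /= addfC.
  by move=> u; rewrite in_cons => /orP [/eqP -> //|]; apply: Ixs.
move=> [a [[|x xs] [Aa [//= [sz] [Ixs ->]]]]].
exists (foldr add a xs), x; split.
  exists a, xs; split => //; split => //; split => // u uin.
  by apply: Ixs; rewrite in_cons uin orbT.
by split; [apply: Ixs; rewrite mem_head | rewrite addfC].
Qed.

End Help.

Section P1.
Variables (e : nat) (n : 'I_e -> nat).
Local Notation add := (@addf e).

Lemma Iso_phi t (x : fact e) : Iso n t x -> phi n x = t.
Proof. by case. Qed.

Lemma ZE t (x : fact e) : Z n t x = (phi n x = t). Proof. by []. Qed.

Lemma part1 (L : set nat) (b : nat) (hbL : ~ L b) (s q : nat)
  (hq : leS n (q * b) s)
  (hqmax : forall j : nat, leS n (j * b) s -> (j <= q)%N) :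
  Bset n s (L `|` [set b]) =
    [set z | exists2 j : nat, (j <= q)%N &
               msum_iter (Bset n (s - j * b) L) (Iso n b) j z].
Proof.
apply/seteqP; split => z /=.
  move=> [Zz [w [xs [Isw [Hxs Ez]]]]]; subst z.
  pose p := fun x : fact e => `[< Iso n b x >].
  set xb := [seq x <- xs | p x].
  set xl := [seq x <- xs | predC p x].
  have pf : perm_eq (xb ++ xl) xs by rewrite perm_filterC.
  have -> : foldr add w xs = foldr add (foldr add w xl) xb.
    by rewrite -foldr_cat; apply: foldr_perm; rewrite perm_sym.
  have Hb : forall x, x \in xb -> Iso n b x.
    by move=> x; rewrite mem_filter => /andP [/asboolP].
  have Hl : forall x, x \in xl -> IsoL n L x.
    move=> x; rewrite mem_filter => /andP [/= /asboolP nb /Hxs [t [[Lt|tb] It]]].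
      by exists t.
    by exfalso; apply: nb; rewrite -tb.
  have Hphi : phi n (foldr add w xl) + size xb * b = s.
    have Zz' : phi n (foldr add w xs) = s := Zz.
    rewrite -(foldr_perm w pf) foldr_cat in Zz'; move: Zz'.
    rewrite phi_foldr (sum_const_phi (t := b)) // => x /Hb; exact: Iso_phi.
  exists (size xb).
    apply: hqmax; split; first by rewrite -Hphi leq_addl.
    by exists (foldr add w xl); rewrite -Hphi addnK.
  rewrite msum_iterE; exists (foldr add w xl), xb; split; last by split.
  split; first by rewrite ZE -Hphi addnK.
  by exists w, xl.
move=> [j jq]; rewrite msum_iterE => -[a [xs [[Za [w [ys [Isw [Hys Ea]]]]] [sz [Hxs ->]]]]]; subst a.
have jb : j * b <= s by case: hq => hq _; apply: leq_trans hq; rewrite leq_mul2r jq orbT.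
split.
  rewrite ZE phi_foldr (sum_const_phi (t := b)); last by move=> x /Hxs /Iso_phi.
  by rewrite ZE in Za; rewrite Za sz subnK.
exists w, (xs ++ ys); split => //; split; last by rewrite foldr_cat.
move=> x; rewrite mem_cat => /orP [/Hxs Ix|/Hys [t [Lt It]]].
  by exists b; split => //; right.
by exists t; split => //; left.
Qed.
End P1.

Section P2.
Variables (e : nat) (n : 'I_e -> nat).
Local Notation add := (@addf e).

Lemma Z_finite (hpos : forall i, 0 < n i) t : finite_set (Z n t).
Proof.
apply: (@sub_finite_set _ _
   ((fun f : {ffun 'I_e -> 'I_t.+1} => ([ffun i => val (f i)] : fact e)) @` setT)).
  move=> z Zz; exists [ffun i => inord (z i)] => //.
  apply/ffunP => i; rewrite !ffunE /=; apply: inordK; rewrite ltnS.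
  have Zz' : phi n z = t := Zz.
  rewrite -Zz' /phi (bigD1 i) //=.
  apply: leq_trans (leq_addr _ _); exact: leq_pmulr.
apply: finite_image; exact: finite_finset.
Qed.

Lemma card_sub (A B : set (fact e)) : A `<=` B -> finite_set B ->
  #|` fset_set A| <= #|` fset_set B|.
Proof.
move=> AB fB; have fA := sub_finite_set AB fB.
by apply: fsubset_leq_card; rewrite -fset_set_sub.
Qed.

Lemma Tl0 (A I : set (fact e)) : Tl A I 0 = A.
Proof. by rewrite -msum_iterE. Qed.

Lemma Tl_nil (A : set (fact e)) j : Tl A [set x | x \in [::]] j.+1 = set0.
Proof.
apply/seteqP; split => z //= [a [[|y xs] [_ [//= _ [H _]]]]].
by have := H y (mem_head _ _).
Qed.

Lemma Tl_sub (A : set (fact e)) (x : fact e) l j :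
  Tl A [set y | y \in x :: l] j.+1 `<=`
  Tl A [set y | y \in l] j.+1 `|` (add x @` Tl A [set y | y \in x :: l] j).
Proof.
move=> z [a [xs [Aa [sz [Hxs Ez]]]]]; subst z.
have [xin|xnin] := boolP (x \in xs).
  right; exists (foldr add a (rem x xs)).
    exists a, (rem x xs); split => //; split; first by rewrite size_rem // sz.
    by split => // y /mem_rem /Hxs.
  by rewrite (foldr_perm a (perm_to_rem xin)).
left; exists a, xs; split => //; split => //; split => // y yin.
have := Hxs y yin; rewrite /= in_cons => /orP [/eqP yx|//].
by move: xnin; rewrite -yx yin.
Qed.

Lemma Tl_bound (A : set (fact e)) (fA : finite_set A) (l : seq (fact e)) j :
  finite_set (Tl A [set x | x \in l] j) /\
  #|` fset_set (Tl A [set x | x \in l] j)| <= #|` fset_set A| * 'C(size l + j - 1, j).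
Proof.
elim: l j => [|x l IHl] j.
  case: j => [|j]; first by rewrite Tl0 bin0 muln1.
  by rewrite Tl_nil fset_set0 cardfs0; split => //; exact: finite_set0.
elim: j => [|j IHj]; first by rewrite Tl0 bin0 muln1.
have [f1 c1] := IHl j.+1.
have [f2 c2] := IHj.
have f3 : finite_set (add x @` Tl A [set y | y \in x :: l] j) by exact: finite_image.
have fU : finite_set (Tl A [set y | y \in l] j.+1 `|` (add x @` Tl A [set y | y \in x :: l] j)).
  by rewrite finite_setU.
split; first exact: sub_finite_set (@Tl_sub A x l j) fU.
apply: leq_trans (card_sub (@Tl_sub A x l j) fU) _.
rewrite fset_setU // cardfsU; apply: leq_trans (leq_subr _ _) _.
rewrite fset_set_image //.
have -> : size (x :: l) + j.+1 - 1 = (size l + j).+1 by rewrite /= addSn addnS subn1.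
rewrite binS mulnDr; apply: leq_add.
  by move: c1; rewrite addnS subn1.
move: c2; rewrite /= addSn subn1 => c2.
by apply: leq_trans c2; exact: leq_imfset_card.
Qed.

Lemma union_bound (F : nat -> set (fact e)) (hF : forall j, finite_set (F j)) q :
  finite_set [set z | exists2 j, j <= q & F j z] /\
  #|` fset_set [set z | exists2 j, j <= q & F j z]| <= \sum_(0 <= j < q.+1) #|` fset_set (F j)|.
Proof.
elim: q => [|q [fq cq]].
  have -> : [set z | exists2 j, j <= 0 & F j z] = F 0.
    apply/seteqP; split => z /=; first by case=> j; rewrite leqn0 => /eqP ->.
    by move=> Fz; exists 0.
  by rewrite big_nat1.
have -> : [set z | exists2 j, j <= q.+1 & F j z] =
          [set z | exists2 j, j <= q & F j z] `|` F q.+1.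
  apply/seteqP; split => z /=.
    by case=> j; rewrite leq_eqVlt ltnS => /orP [/eqP ->|jq Fz]; [right|left; exists j].
  by case=> [[j jq Fz]|Fz]; [exists j => //; apply: leqW|exists q.+1].
split; first by rewrite finite_setU.
rewrite big_nat_recr //= fset_setU // cardfsU; apply: leq_trans (leq_subr _ _) _.
exact: leq_add.
Qed.

End P2.

End Helpers.
Import Helpers.


Theorem lemma5p12 (e : nat) (n : 'I_e -> nat)
  (hS : numerical_semigroup_min_gens n)
  (L : set nat) (hL : L `<=` IBetti n) (hL0 : L !=set0)
  (b : nat) (hb : IBetti n b) (hbL : ~ L b)
  (s : nat) (hs : inS n s)
  (q : nat) (hq : leS n (q * b) s)
  (hqmax : forall j : nat, leS n (j * b) s -> (j <= q)%N) :
  Bset n s (L `|` [set b]) =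
    [set z | exists2 j : nat, (j <= q)%N &
               msum_iter (Bset n (s - j * b) L) (Iso n b) j z]
  /\
  (#|` fset_set (Bset n s (L `|` [set b])) | <=
     \sum_(0 <= j < q.+1)
        #|` fset_set (Bset n (s - j * b) L) | * 'C(iso_card n b + j - 1, j))%N.
Proof.
have E := part1 hbL hq hqmax.
split => //.
have hpos : forall i, (0 < n i)%N.
  move=> i; rewrite lt0n; apply/negP => /eqP ni0; apply: (hS.2 i).
  exists [ffun _ => 0]; rewrite ffunE; split => //.
  by rewrite ni0 /phi big1 // => k _; rewrite ffunE.
have fI : finite_set (Iso n b).
  by apply: sub_finite_set (Z_finite hpos b) => x [].
pose l := enum_fset (fset_set (Iso n b)).
have IsoE : Iso n b = [set x | x \in l].
  have memE : forall x, (x \in l) = (x \in Iso n b) := in_fset_set fI.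
  apply/seteqP; split => x /=.
    by move=> Ix; rewrite memE; apply: mem_set.
  by rewrite memE => /set_mem.
have fA : forall j, finite_set (Bset n (s - j * b) L).
  by move=> j; apply: sub_finite_set (Z_finite hpos (s - j * b)) => x [].
have key : forall j, msum_iter (Bset n (s - j * b) L) (Iso n b) j =
   Tl (Bset n (s - j * b) L) [set x | x \in l] j.
  by move=> j; rewrite msum_iterE IsoE.
rewrite E.
have [_ U] := union_bound (F := fun j => msum_iter (Bset n (s - j * b) L) (Iso n b) j)
  (fun j => eq_ind_r (@finite_set _) (Tl_bound (fA j) l j).1 (key j)) q.
apply: leq_trans U _.
apply: leq_sum => j _.
rewrite key; exact: (Tl_bound (fA j) l j).2.
Qed.
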